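(* Let $\beta>0$ and let $T$ be an even integer with $\beta/T\le1$. Let $\mathcal{I}:=\bigcup_{\alpha\in[0,\beta/T]}\Delta^2_\alpha$. For $b\in\{0,1\}$ let $\mathcal{L}^b:=(I_2,I_2,\mathcal{I},x_1,(\gamma_t)_t,(w_t^b)_t,(c_t)_t)$ be the simplex LDS on $\Delta^2$ with $x_1=(0,1)$, $c_t(x,u):=|x(2)-1/2|$ if $t>T/2$ and $c_t(x,u):=0$ otherwise, $\gamma_t:=\frac12\mathbf{1}[t=T/2]$, $w_t^0:=(1/2,1/2)$ and $w_t^1:=(1,0)$ for all $t$. Define $\pi^0(x):=\frac\beta T(1/2,1/2)$ and $\pi^1(x):=(0,0)$. Then $\pi^0,\pi^1\in\mathcal{K}(\mathcal{I})$, and: (i) the iterates $(x_t,u_t)_{t=1}^T$ produced by following $\pi^0$ in $\mathcal{L}^0$ satisfy $\sum_{t=1}^Tc_t(x_t,u_t)\le\frac T\beta e^{-\beta/2}$; (ii) the iterates produced by following $\pi^1$ in $\mathcal{L}^1$ satisfy $\sum_{t=1}^Tc_t(x_t,u_t)=0$.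
   Context: $\Delta^2$ is the probability simplex in $\mathbb{R}^2$, $\Delta^2_\alpha:=\alpha\Delta^2$, $I_2$ is the $2\times2$ identity, $x(i)$ denotes the $i$-th coordinate. A simplex LDS $(A,B,\mathcal{I},x_1,(\gamma_t),(w_t),(c_t))$ evolves as $x_{t+1}=(1-\gamma_t)[(1-\|u_t\|_1)Ax_t+Bu_t]+\gamma_tw_t$ for controls $u_t\in\mathcal{I}$, with cost $c_t(x_t,u_t)$. $\mathbb{S}^2_\alpha:=\{\alpha M:M\text{ a }2\times2\text{ column-stochastic matrix}\}$, and $\mathcal{K}(\mathcal{I})$ is the set of linear time-invariant policies $x\mapsto Kx$ with $K\in\bigcup_{\alpha\in[0,\beta/T]}\mathbb{S}^2_\alpha$ (on $\Delta^2$, $\pi^0$ is such a policy with $K=\frac\beta T\cdot\frac12\mathbf{1}\mathbf{1}^\top$). *)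

(* Defs.v *)
From HB Require Import structures.
From mathcomp Require Import all_boot all_order all_algebra.
From mathcomp Require Import all_classical all_reals all_analysis.
Set Implicit Arguments. Unset Strict Implicit. Unset Printing Implicit Defensive.
Import Order.TTheory GRing.Theory Num.Theory.
Local Open Scope ring_scope.

Section Defs.
Variable R : realType.

Definition simplex (n : nat) : set 'cV[R]_n :=
  [set x | (forall i, 0 <= x i 0) /\ \sum_i x i 0 = 1].

Definition scaled_simplex (n : nat) (alpha : R) : set 'cV[R]_n :=
  [set x | exists2 y, simplex y & x = alpha *: y].

Definition ctrl_set (beta : R) (T : nat) : set 'cV[R]_2 :=
  [set u | exists2 alpha, 0 <= alpha <= beta / T%:R & scaled_simplex alpha u].

Definition column_stochastic (n : nat) (M : 'M[R]_n) : Prop :=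
  (forall i j, 0 <= M i j) /\ (forall j, \sum_i M i j = 1).

Definition scaled_stoch (n : nat) (alpha : R) : set 'M[R]_n :=
  [set K | exists2 M, column_stochastic M & K = alpha *: M].

Definition lti_policies (beta : R) (T : nat) : set ('cV[R]_2 -> 'cV[R]_2) :=
  [set pi | exists2 alpha, 0 <= alpha <= beta / T%:R &
     exists2 K, scaled_stoch alpha K & forall x, simplex x -> pi x = K *m x].

Definition l1norm (n : nat) (u : 'cV[R]_n) : R := \sum_i `|u i 0|.

Definition lds_step (n : nat) (A B : 'M[R]_n) (gamma : nat -> R)
  (w : nat -> 'cV[R]_n) (t : nat) (x u : 'cV[R]_n) : 'cV[R]_n :=
  (1 - gamma t) *: ((1 - l1norm u) *: (A *m x) + B *m u) + gamma t *: w t.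

(* lds_traj ... k = x_{k+1}, the state at time k+1, when following pi
   (u_t = pi x_t) from x_1 *)
Fixpoint lds_traj (n : nat) (A B : 'M[R]_n) (x1 : 'cV[R]_n) (gamma : nat -> R)
  (w : nat -> 'cV[R]_n) (pi : 'cV[R]_n -> 'cV[R]_n) (k : nat) : 'cV[R]_n :=
  match k with
  | 0 => x1
  | k'.+1 => let x := lds_traj A B x1 gamma w pi k' in
             lds_step A B gamma w k'.+1 x (pi x)
  end.

Definition lds_cost (n : nat) (A B : 'M[R]_n) (x1 : 'cV[R]_n) (gamma : nat -> R)
  (w : nat -> 'cV[R]_n) (c : nat -> 'cV[R]_n -> 'cV[R]_n -> R)
  (pi : 'cV[R]_n -> 'cV[R]_n) (T : nat) : R :=
  \sum_(k < T) let x := lds_traj A B x1 gamma w pi k in c k.+1 x (pi x).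

Definition vec2 (a b : R) : 'cV[R]_2 :=
  \col_(i < 2) (if i == 0 :> nat then a else b).

(* coordinate x(2) (1-based) *)
Definition coord2 (x : 'cV[R]_2) : R := x (1 : 'I_2) 0.

End Defs.

(* Main.v *)
Require Import Defs.
From HB Require Import structures.
From mathcomp Require Import all_boot all_order all_algebra.
From mathcomp Require Import all_classical all_reals all_analysis.
From mathcomp Require Import ring lra.
Import Order.TTheory GRing.Theory Num.Theory.
Local Open Scope ring_scope.

Section H.
Variable R : realType.

Lemma vec2E (a b : R) (i : 'I_2) : vec2 a b i 0 = if i == 0 :> nat then a else b.
Proof. by rewrite mxE. Qed.

Lemma sum2 (f : 'I_2 -> R) : \sum_i f i = f 0 + f 1.
Proof. rewrite !big_ord_recr big_ord0 /=. have -> : widen_ord (m:=2) (leqnSn 1) ord_max = 0 by apply: val_inj. have -> : (ord_max : 'I_2) = 1 by apply: val_inj. lra. Qed.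

Lemma l1vec2 (a : R) : l1norm (vec2 a a) = `|a| + `|a|.
Proof. by rewrite /l1norm sum2 !vec2E. Qed.

Lemma step_coord2 (gamma : nat -> R) w t x a :
  coord2 (lds_step 1%:M 1%:M gamma w t x (vec2 a a)) =
  (1 - gamma t) * ((1 - (`|a| + `|a|)) * coord2 x + a) + gamma t * coord2 (w t).
Proof.
by rewrite /lds_step !mul1mx l1vec2 /coord2 !mxE /=.
Qed.

Lemma lti_const (beta : R) (T : nat) (alpha : R) :
  0 <= alpha <= beta / T%:R ->
  lti_policies beta T (fun _ => vec2 (alpha * 2^-1) (alpha * 2^-1)).
Proof.
move=> ha; exists alpha => //.
exists (alpha *: const_mx (2^-1 : R)).
  exists (const_mx 2^-1) => //; split.
    by move=> i j; rewrite mxE invr_ge0 ler0n.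
  by move=> j; rewrite sum2 !mxE; lra.
move=> x [_ hs]; apply/matrixP => i j.
rewrite ord1 vec2E -scalemxAl !mxE.
under eq_bigr do rewrite mxE.
rewrite -mulr_sumr hs mulr1 if_same.
by [].
Qed.


Lemma traj0 (m : nat) (a : R) k : (0 < m)%N -> 0 <= a ->
  coord2 (lds_traj 1%:M 1%:M (vec2 0 1)
     (fun t : nat => if t == m then (2^-1 : R) else 0)
     (fun _ : nat => vec2 (2^-1 : R) (2^-1)) (fun _ => vec2 a a) k) - 2^-1
  = 2^-1 * (1 - (a + a)) ^+ k * (if (m <= k)%N then 2^-1 else 1).
Proof.
move=> hm ha; elim: k => [|k IH].
  by rewrite /= /coord2 vec2E /= expr0 leqn0 (negbTE (lt0n_neq0 hm)); lra.
rewrite /= step_coord2 ger0_norm // /coord2 vec2E /=.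
move: IH; rewrite /coord2 => IH.
have -> : lds_traj 1%:M 1%:M (vec2 0 1)
     (fun t : nat => if t == m then (2^-1 : R) else 0)
     (fun _ : nat => vec2 (2^-1 : R) (2^-1)) (fun _ => vec2 a a) k 1 0 =
  2^-1 * (1 - (a + a)) ^+ k * (if (m <= k)%N then 2^-1 else 1) + 2^-1 by lra.
rewrite exprS.
case: (eqVneq k.+1 m) => [<-|hne].
  rewrite ?eqxx ?leqnn ?ltnn ?ltnSn; lra.
rewrite ?(negbTE hne).
have -> : (m <= k.+1)%N = (m <= k)%N.
  by rewrite leq_eqVlt eq_sym (negbTE hne) ltnS.
case: ifP => _; lra.
Qed.

Lemma traj1 (m : nat) k : (0 < m)%N ->
  coord2 (lds_traj 1%:M 1%:M (vec2 0 1)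
     (fun t : nat => if t == m then (2^-1 : R) else 0)
     (fun _ : nat => vec2 (1 : R) 0) (fun _ => vec2 (0:R) 0) k)
  = if (m <= k)%N then 2^-1 else 1.
Proof.
move=> hm; elim: k => [|k IH].
  by rewrite /= /coord2 vec2E /= leqn0 (negbTE (lt0n_neq0 hm)).
rewrite /= step_coord2 normr0 /coord2 vec2E /=.
move: IH; rewrite /coord2 => ->.
case: (eqVneq k.+1 m) => [<-|hne].
  rewrite ?eqxx ?leqnn ?ltnn ?ltnSn; lra.
rewrite ?(negbTE hne).
have -> : (m <= k.+1)%N = (m <= k)%N.
  by rewrite leq_eqVlt eq_sym (negbTE hne) ltnS.
case: ifP => _; lra.
Qed.

Lemma geom (alpha : R) (m n : nat) :
  alpha * \sum_(k < n) (if (m <= k)%N then (1 - alpha) ^+ k else 0)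
  + (1 - alpha) ^+ (maxn n m) = (1 - alpha) ^+ m.
Proof.
elim: n => [|n IH].
  by rewrite big_ord0 mulr0 add0r max0n.
rewrite big_ord_recr /=.
case: (leqP m n) => hmn.
  have e1 : maxn n m = n by apply/maxn_idPl.
  have e2 : maxn n.+1 m = n.+1 by apply/maxn_idPl; rewrite (leq_trans hmn).
  rewrite e2 -IH e1 exprS; lra.
have e1 : maxn n m = m by apply/maxn_idPr/ltnW.
have e2 : maxn n.+1 m = m by apply/maxn_idPr.
by rewrite e2 -{2}IH e1 addr0.
Qed.

End H.

Theorem lemma12 (R : realType) (beta : R) (T : nat)
  (hbeta : 0 < beta) (hT0 : (0 < T)%N) (hTeven : ~~ odd T)
  (hbT : beta / T%:R <= 1) :
  let x1 := vec2 (0 : R) 1 in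
  let c := fun (t : nat) (x u : 'cV[R]_2) =>
             if (T./2 < t)%N then `|coord2 x - 2^-1| else 0 in
  let gamma := fun t : nat => if t == T./2 then (2^-1 : R) else 0 in
  let w0 := fun _ : nat => vec2 (2^-1 : R) (2^-1) in
  let w1 := fun _ : nat => vec2 (1 : R) 0 in
  let pi0 := fun _ : 'cV[R]_2 => vec2 (beta / T%:R * 2^-1) (beta / T%:R * 2^-1) in
  let pi1 := fun _ : 'cV[R]_2 => vec2 (0 : R) 0 in
  [/\ lti_policies beta T pi0, lti_policies beta T pi1,
      lds_cost 1%:M 1%:M x1 gamma w0 c pi0 T <= T%:R / beta * expR (- (beta / 2))
    & lds_cost 1%:M 1%:M x1 gamma w1 c pi1 T = 0].
Proof.
move=> x1 c gamma w0 w1 pi0 pi1.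
have hTpos : (0 : R) < T%:R by rewrite ltr0n.
set alpha := beta / T%:R.
have ha0 : 0 < alpha by rewrite /alpha divr_gt0.
have hT2 : T = (T./2).*2 by rewrite -{1}(odd_double_half T) (negbTE hTeven).
have hm : (0 < T./2)%N by rewrite -double_gt0 -hT2.
split.
- by apply: lti_const; rewrite (ltW ha0) lexx.
- have h := @lti_const R beta T 0; rewrite mul0r in h; apply: h.
  by rewrite lexx ltW.
- rewrite /lds_cost.
  set q := 1 - alpha.
  have hq : 0 <= q by rewrite /q subr_ge0.
  have -> : \sum_(k < T) (let x := lds_traj 1%:M 1%:M x1 gamma w0 pi0 k in c k.+1 x (pi0 x))
     = (2^-1 * 2^-1) * \sum_(k < T) (if (T./2 <= k)%N then q ^+ k else 0 : R).
    rewrite mulr_sumr; apply: eq_bigr => k _ /=.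
    rewrite /c ltnS.
    have ha : 0 <= alpha * 2^-1 by apply: mulr_ge0; [exact: ltW|rewrite invr_ge0 ler0n].
    have := @traj0 R (T./2) (alpha * 2^-1) k hm ha.
    rewrite -/x1 -/gamma -/w0 => ->.
    have -> : 1 - (alpha * 2^-1 + alpha * 2^-1) = q by rewrite /q; congr (_ - _); lra.
    case: ifP => hk; rewrite ?hk; last by rewrite mulr0.
    have hqk : 0 <= q ^+ k by exact: exprn_ge0.
    rewrite ger0_norm; first lra.
    by apply: mulr_ge0; [apply: mulr_ge0 => //; rewrite invr_ge0 ler0n|rewrite invr_ge0 ler0n].
  set S := \sum_(k < T) _.
  have hS : 0 <= S by apply: sumr_ge0 => k _; case: ifP => _ //; exact: exprn_ge0.
  have hgeom := @geom R alpha (T./2) T. rewrite -/q -/S in hgeom.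
  have hqm : 0 <= q ^+ maxn T T./2 by exact: exprn_ge0.
  have hSle : S <= q ^+ T./2 / alpha.
    rewrite ler_pdivlMr // mulrC; lra.
  have hqe : q ^+ T./2 <= expR (- (beta / 2)).
    have -> : - (beta / 2) = T./2%:R * (- alpha).
      have hTm : T%:R = 2 * (T./2)%:R :> R by rewrite {1}hT2 -muln2 natrM mulrC.
      rewrite /alpha hTm; field.
      by rewrite pnatr_eq0 -lt0n hm.
    rewrite expRM_natl; apply: lerXn2r => //.
      by rewrite nnegrE expR_ge0.
    have := expR_ge1Dx (- alpha); rewrite /q; lra.
  have -> : T%:R / beta = alpha^-1 by rewrite /alpha invf_div.
  have h1 : S <= expR (- (beta / 2)) / alpha.
    apply: (le_trans hSle); apply: ler_pM => //.
      exact: exprn_ge0.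
    by rewrite invr_ge0 ltW.
  have : 2^-1 * 2^-1 * S <= S.
    rewrite -{2}(mul1r S); apply: ler_wpM2r => //; lra.
  rewrite mulrC in h1; lra.
- rewrite /lds_cost; apply: big1 => k _ /=.
  rewrite /c; case: ifP => // hk.
  have := @traj1 R (T./2) k hm; rewrite -/x1 -/gamma -/w1 => ->.
  by rewrite -ltnS hk subrr normr0.
Qed.
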